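(* Let $f \in \mathbb{Z}[T, Y]$ be monic in $Y$, of degree $d_T$ in $T$ and degree $d_Y$ in $Y$. Let $t = a/b \in \mathbb{Q}$ be written in lowest terms, and let $y \in \mathbb{Q}$ satisfy $f(t, y) = 0$. Then $y = c / b^{d_T}$ for some $c \in \mathbb{Z}$ with $|c| \leq 2 (d_T + 1) \|f\| H(t)^{d_T}$.
   Context: Monic in $Y$ means the leading coefficient of $f$ as a polynomial in $Y$ over $\mathbb{Z}[T]$ is $1$. The height of $t = a/b$ in lowest terms is $H(t) = \max(|a|,|b|)$. For a nonzero integer polynomial $f$, $\|f\|$ is the maximum of $2$ and the absolute values of its coefficients. *)

(* Defs.v *)
From HB Require Import structures.
From mathcomp Require Import all_boot all_order all_algebra.
Set Implicit Arguments. Unset Strict Implicit. Unset Printing Implicit Defensive.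
Import Order.TTheory GRing.Theory Num.Theory.
Local Open Scope ring_scope.

(* A bivariate integer polynomial f in Z[T,Y] is represented as a polynomial
   in Y whose coefficients are polynomials in T: f : {poly {poly int}}. *)

Definition degT (f : {poly {poly int}}) : nat :=
  \max_(i < size f) (size (f`_i)%R).-1.

Definition degY (f : {poly {poly int}}) : nat := (size f).-1.

Definition eval2 (f : {poly {poly int}}) (t y : rat) : rat :=
  (map_poly (fun p : {poly int} => (map_poly (fun z : int => z%:~R) p).[t]) f).[y].

Definition normf (f : {poly {poly int}}) : int :=
  \big[Num.max/2]_(i < size f) \big[Num.max/2]_(j < size (f`_i)%R) `|((f`_i)`_j)%R|.

Definition height (a b : int) : int := Num.max `|a| `|b|.

(* Main.v *)
Require Import Defs.
From HB Require Import structures.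
From mathcomp Require Import all_boot all_order all_algebra.
From mathcomp Require Import ring lra zify.
Import Order.TTheory GRing.Theory Num.Theory.
Local Open Scope ring_scope.
Lemma int_root (m : nat) (C : nat -> int) (z : rat) :
  z ^+ m + \sum_(i < m) (C i)%:~R * z ^+ i = 0 -> z \is a Num.int.
Proof.
case: m => [|m]; first by rewrite big_ord0 expr0 addr0 => /eqP; rewrite oner_eq0.
move=> Hz.
set p := numq z; set q := denq z.
have qn0 : (q%:~R : rat) != 0 by rewrite intr_eq0 denq_neq0.
have zq : z * q%:~R = p%:~R by rewrite numqE.
have eq : p ^+ m.+1 = q * (- \sum_(i < m.+1) C i * p ^+ i * q ^+ (m - i)).
  apply: (@intr_inj rat); apply/eqP; rewrite -subr_eq0; apply/eqP.
  rewrite rmorphXn rmorphM rmorphN rmorph_sum /= mulrN opprK.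
  rewrite mulr_sumr.
  transitivity ((q%:~R : rat) ^+ m.+1 * (z ^+ m.+1 + \sum_(i < m.+1) (C i)%:~R * z ^+ i)); last by rewrite Hz mulr0.
  rewrite mulrDr; congr (_ + _).
    by rewrite -zq exprMn mulrC.
  rewrite mulr_sumr; apply: eq_bigr => i _.
  idtac.
  rewrite !rmorphM !rmorphXn /= -zq exprMn.
  have -> : (q%:~R : rat) ^+ m.+1 = q%:~R ^+ (m - i) * q%:~R ^+ i * q%:~R.
    by rewrite -exprD -exprSr subnK // -ltnS.
  ring.
have dv : (q %| p ^+ m.+1)%Z by apply/dvdzP; exists (- \sum_(i < m.+1) C i * p ^+ i * q ^+ (m - i)); rewrite mulrC.
have cop : coprimez q (p ^+ m.+1).
  by apply: coprimezXr; rewrite coprimez_sym coprimezE coprime_num_den.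
rewrite dvdzE in dv; rewrite coprimezE /coprime (gcdn_idPl dv) in cop.
by rewrite Qint_def -absz_denq -/q (eqP cop).
Qed.
Lemma cauchy_bound (R : realFieldType) (m : nat) (g : nat -> R) (y K : R) :
  0 <= K -> (forall i, (i < m)%N -> `|g i| <= K) ->
  y ^+ m + \sum_(i < m) g i * y ^+ i = 0 -> `|y| <= 1 + K.
Proof.
move=> K0 Hg Hy.
have [y1|y1] := lerP `|y| 1; first by apply: le_trans y1 _; rewrite lerDl.
set u := `|y| in y1 *.
have Hn : u ^+ m <= K * \sum_(i < m) u ^+ i.
  have -> : u ^+ m = `|\sum_(i < m) g i * y ^+ i|.
    by rewrite /u -normrX -normrN; congr `|_|; apply/eqP; rewrite eq_sym -addr_eq0 addrC Hy.
  rewrite mulr_sumr; apply: le_trans (ler_norm_sum _ _ _) _; apply: ler_sum => i _.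
  by rewrite normrM normrX; apply: ler_wpM2r; [exact: exprn_ge0 | exact: Hg].
have Hs : (u - 1) * \sum_(i < m) u ^+ i = u ^+ m - 1 by rewrite subrX1.
have um : 0 < u ^+ m by apply: exprn_gt0; lra.
have : (u - 1) * u ^+ m <= K * u ^+ m.
  apply: le_trans (_ : (u - 1) * (K * \sum_(i < m) u ^+ i) <= _).
    by apply: ler_wpM2l => //; lra.
  rewrite mulrCA Hs; nra.
rewrite ler_pM2r //; lra.
Qed.
Lemma size_map_le (R S : nzRingType) (h : R -> S) (p : {poly R}) : (size (map_poly h p) <= size p)%N.
Proof. exact: size_poly. Qed.

Lemma scaled_eval (q : {poly int}) (d : nat) (a b : int) (t : rat) :
  b != 0 -> t = a%:~R / b%:~R -> (size q <= d.+1)%N ->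
  (map_poly (fun z : int => z%:~R) q).[t] * (b%:~R) ^+ d =
  (\sum_(j < d.+1) q`_j * a ^+ j * b ^+ (d - j))%:~R.
Proof.
move=> b0 -> sq.
rewrite (horner_coef_wide _ (leq_trans (size_map_le _ _ _ _) sq)) mulr_suml rmorph_sum.
apply: eq_bigr => j _; rewrite coef_map_id0 // !rmorphM !rmorphXn /=.
have bn : (b%:~R : rat) != 0 by rewrite intr_eq0.
have -> : (b%:~R : rat) ^+ d = b%:~R ^+ j * b%:~R ^+ (d - j) by rewrite -exprD subnKC // -ltnS.
rewrite expr_div_n -!mulrA; congr (_ * _); congr (_ * _).
by rewrite mulKf ?expf_neq0.
Qed.

Lemma E_bound (q : {poly int}) (d : nat) (a b N : int) :
  (forall j, `|q`_j| <= N) ->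
  `|\sum_(j < d.+1) q`_j * a ^+ j * b ^+ (d - j)| <= (d.+1)%:R * N * Num.max `|a| `|b| ^+ d.
Proof.
move=> HN; set H : int := Num.max `|a| `|b|.
have aH : `|a| <= H by rewrite le_max lexx.
have bH : `|b| <= H by rewrite le_max lexx orbT.
have N0 : 0 <= N by apply: le_trans (HN 0%N).
apply: le_trans (ler_norm_sum _ _ _) _.
have -> : (d.+1)%:R = \sum_(j < d.+1) (1 : int) by rewrite sumr_const card_ord.
rewrite !mulr_suml.
apply: ler_sum => j _; rewrite !normrM !normrX.
have -> : H ^+ d = H ^+ j * H ^+ (d - j) by rewrite -exprD subnKC // -ltnS.
rewrite mulrA mul1r.
have H0 : 0 <= H by apply: le_trans bH.
apply: ler_pM; [by rewrite mulr_ge0 // exprn_ge0 | exact: exprn_ge0 | apply: ler_pM | ].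
- exact: normr_ge0.
- exact: exprn_ge0.
- exact: HN.
- by rewrite lerXn2r // nnegrE.
- by rewrite lerXn2r // nnegrE.
Qed.

Theorem lemma2p4 (f : {poly {poly int}}) (dT dY : nat) :
  f \is monic -> degT f = dT -> degY f = dY ->
  forall (a b : int), b != 0 -> coprimez a b ->
  forall (t y : rat), t = a%:~R / b%:~R -> eval2 f t y = 0 ->
  exists c : int, y = c%:~R / (b%:~R) ^+ dT /\
    `|c| <= 2 * (dT.+1)%:R * normf f * height a b ^+ dT.
Proof.
move=> mon dTe _ a b b0 _ t y te Hev.
set n := (size f).-1.
have f0 : f != 0 by apply: monic_neq0.
have sf : size f = n.+1 by rewrite prednK // size_poly_gt0.
have lc : f`_n = 1 by move/eqP: mon; rewrite /lead_coef.
pose h := (fun p : {poly int} => (map_poly (fun z : int => z%:~R) p).[t] : rat).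
have Hev' : y ^+ n + \sum_(i < n) h (f`_i) * y ^+ i = 0.
  move: Hev; rewrite /eval2 (horner_coef_wide _ (leq_trans (size_map_le _ _ _ _) (eq_leq sf))).
  rewrite big_ord_recr /= coef_map_id0; last by rewrite map_poly0 horner0.
  rewrite lc -polyC1 map_polyC hornerC /= mul1r addrC.
  congr (_ + _ = _); apply: eq_bigr => i _; rewrite coef_map_id0 //.
  by rewrite map_poly0 horner0.
have szq i : (size (f`_i)%R <= dT.+1)%N.
  case: (ltnP i (size f)) => hi; last by rewrite nth_default // size_poly0.
  rewrite -dTe /degT; apply: leq_trans (leqSpred _) _; rewrite ltnS.
  have := @leq_bigmax _ (fun j : 'I_(size f) => (size (f`_j)%R).-1) (Ordinal hi). by [].
have N2 : 2 <= normf f by apply: bigmax_ge_id.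
have coefN i j : `|(f`_i)`_j| <= normf f.
  have N0 : 0 <= normf f by apply: le_trans N2.
  case: (ltnP i (size f)) => hi; last by rewrite (nth_default _ hi) coef0 normr0.
  case: (ltnP j (size (f`_i)%R)) => hj; last by rewrite (nth_default _ hj) normr0.
  apply: le_trans (le_bigmax _ (fun i : 'I_(size f) => \big[Num.max/2]_(j < size (f`_i)%R) `|(f`_i)`_j|) (Ordinal hi)).
  exact: (le_bigmax _ (fun j : 'I_(size (f`_i)%R) => `|(f`_i)`_j|) (Ordinal hj)).
pose E i := \sum_(j < dT.+1) f`_i`_j * a ^+ j * b ^+ (dT - j).
pose B := b ^+ dT.
have Bq : B%:~R = (b%:~R : rat) ^+ dT by rewrite rmorphXn.
have Bn0 : (B%:~R : rat) != 0 by rewrite intr_eq0 expf_neq0.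
have hE i : h (f`_i) * B%:~R = (E i)%:~R by rewrite Bq /h (scaled_eval _ _ _ _ _ b0 te (szq i)).
pose z := B%:~R * y.
have zint : z \is a Num.int.
  apply: (@int_root n (fun i => E i * B ^+ (n.-1 - i))).
  transitivity ((B%:~R : rat) ^+ n * (y ^+ n + \sum_(i < n) h (f`_i) * y ^+ i)); last by rewrite Hev' mulr0.
  rewrite mulrDr exprMn mulr_sumr; congr (_ + _); apply: eq_bigr => i _.
  rewrite rmorphM rmorphXn /= -hE /z.
  have -> : (B%:~R : rat) ^+ n = B%:~R ^+ (n.-1 - i) * B%:~R * B%:~R ^+ i.
    rewrite -exprSr -exprD; congr (_ ^+ _).
    case: i => i /= hi; lia.
  rewrite exprMn; move: (h _) (B%:~R : rat) (y ^+ i) (_ ^+ (n.-1 - i)) => u v w x. ring.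
set M : int := (dT.+1)%:R * normf f * height a b ^+ dT.
have HM i : `|E i| <= M by apply: E_bound.
have M0 : 0 <= M by apply: le_trans (HM 0%N).
have BM : `|B| <= M.
  rewrite /B normrX /M /height; set H : int := Num.max `|a| `|b|.
  have bH : `|b| <= H by rewrite le_max lexx orbT.
  apply: le_trans (_ : H ^+ dT <= _).
    by rewrite lerXn2r // nnegrE // (le_trans _ bH).
  rewrite -{1}[H ^+ dT]mul1r ler_wpM2r ?exprn_ge0 ?(le_trans _ bH) //.
  have : (1 : int) <= (dT.+1)%:R by rewrite ler1n.
  move=> h1; apply: le_trans h1 _; rewrite -{1}[(dT.+1)%:R]mulr1 ler_wpM2l //.
  by apply: le_trans N2.
have Bpos : (0 : rat) < `|B%:~R| by rewrite normr_gt0.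
have yb : `|y| <= 1 + M%:~R / `|B%:~R|.
  apply: (@cauchy_bound _ n (fun i => h (f`_i))) => //.
    by apply: divr_ge0; rewrite ?ler0z.
  move=> i _; rewrite ler_pdivlMr //.
  by rewrite -normrM hE -intr_norm ler_int.
exists (numq z); split.
  by rewrite (numqK zint) -Bq /z mulrC mulKf.
rewrite -(ler_int rat) intr_norm (numqK zint) /z normrM.
have -> : (2 * (dT.+1)%:R * normf f * height a b ^+ dT)%:~R = (2 : rat) * M%:~R.
  by rewrite /M -!mulrA rmorphM.
apply: le_trans (_ : `|B%:~R| * (1 + M%:~R / `|B%:~R|) <= _).
  by rewrite ler_wpM2l.
rewrite mulrDr mulr1 mulrCA divff ?mulr1; last by rewrite gt_eqF.
have : `|(B%:~R : rat)| <= M%:~R by rewrite -intr_norm ler_int.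
lra.
Qed.
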